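(* Let $C:2^M\to\mathbb{R}_{\ge0}$ be a monotone normalized cost function and $P_C$ its potential function. Then for every allocation $\vec S$, $P_C(\vec S)\le \mathcal H_n\cdot C(\vec S)$, where $\mathcal H_n=\sum_{k=1}^n \frac1k$.
   Context: Setting. $N=\{1,\dots,n\}$ is a set of players and $M_1,\dots,M_n$ are pairwise disjoint finite sets; $M=\bigcup_i M_i$. An allocation is a vector $\vec S=(S_1,\dots,S_n)$ with $S_i\subseteq M_i$, identified with the subset $\bigcup_i S_i$ of $M$. The potential function of a cost function $C$ is $P_C(\vec S)=\sum_{\emptyset\neq I\subseteq N}\frac{C(\bigcup_{i\in I}S_i)}{|I|\binom{n}{|I|}}$. *)

(* Defs.v *)
From HB Require Import structures.
From mathcomp Require Import all_boot all_order all_algebra.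
Set Implicit Arguments. Unset Strict Implicit. Unset Printing Implicit Defensive.
Import Order.TTheory GRing.Theory Num.Theory.
Local Open Scope ring_scope.

(* Players are 'I_n. Items form a finite type M; [owner x] is the player i
   with x \in M_i, so the M_i := [set x | owner x == i] are pairwise disjoint
   and cover M. *)

Definition player_items (M : finType) (n : nat) (owner : M -> 'I_n) (i : 'I_n)
  : {set M} := [set x | owner x == i].

Definition is_allocation (M : finType) (n : nat) (owner : M -> 'I_n)
  (S : 'I_n -> {set M}) : Prop :=
  forall i, S i \subset player_items owner i.

(* The allocation identified with the subset \bigcup_i S_i of M. *)
Definition alloc_set (M : finType) (n : nat) (S : 'I_n -> {set M}) : {set M} :=
  \bigcup_(i < n) S i.

Definition cost_monotone (R : realFieldType) (M : finType) (C : {set M} -> R) : Prop :=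
  forall A B : {set M}, A \subset B -> C A <= C B.

Definition cost_normalized (R : realFieldType) (M : finType) (C : {set M} -> R) : Prop :=
  C set0 = 0.

Definition cost_nonneg (R : realFieldType) (M : finType) (C : {set M} -> R) : Prop :=
  forall A : {set M}, 0 <= C A.

Definition potential (R : realFieldType) (M : finType) (n : nat)
  (C : {set M} -> R) (S : 'I_n -> {set M}) : R :=
  \sum_(I : {set 'I_n} | I != set0)
     C (\bigcup_(i in I) S i) / ((#|I| * 'C(n, #|I|))%N)%:R.

Definition harmonic (R : realFieldType) (n : nat) : R :=
  \sum_(1 <= k < n.+1) (k%:R)^-1.

(* Main.v *)
Require Import Defs.
From HB Require Import structures.
From mathcomp Require Import all_boot all_order all_algebra.
Import Order.TTheory GRing.Theory Num.Theory.
Local Open Scope ring_scope.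

Lemma weights_sum (R : realFieldType) (n : nat) :
  \sum_(I : {set 'I_n} | I != set0) (((#|I| * 'C(n, #|I|))%N)%:R : R)^-1
  = harmonic R n.
Proof.
have Hc : forall I : {set 'I_n}, (#|I| < n.+1)%N.
  by move=> I; rewrite ltnS; apply: leq_trans (max_card _) _; rewrite card_ord.
rewrite (partition_big (fun I : {set 'I_n} => Ordinal (Hc I)) predT) //=.
rewrite /harmonic big_add1 /= big_mkord big_ord_recl /=.
rewrite big1; last first.
  move=> I /andP [HI /eqP Hk].
  by move: HI; rewrite -cards_eq0 -[#|I|]/(nat_of_ord (Ordinal (Hc I))) Hk.
rewrite add0r; apply: eq_bigr => k _.
rewrite (eq_bigr (fun _ => (((k.+1 * 'C(n, k.+1))%N)%:R : R)^-1)); last first.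
  by move=> I /andP [_ /eqP Hk]; rewrite -[#|I|]/(nat_of_ord (Ordinal (Hc I))) Hk.
rewrite sumr_const.
have -> : #|[pred I : {set 'I_n} | (I != set0) && (Ordinal (Hc I) == lift ord0 k)]|
          = 'C(n, k.+1).
  rewrite -[X in _ = 'C(X, _)](card_ord n) -card_draws; apply: eq_card => I.
  rewrite !inE.
  have -> : (Ordinal (Hc I) == lift ord0 k) = (#|I| == k.+1)%N by [].
  case E: (#|I| == k.+1)%N; rewrite ?andbF ?andbT //.
  apply/eqP => H0; move: E; rewrite H0 cards0.
  by []. 
have Cpos : (0 < 'C(n, k.+1))%N by rewrite bin_gt0 (ltn_ord k).
rewrite natrM invfM -[_ *+ _]mulr_natr -mulrA mulVf ?mulr1 //.
by rewrite pnatr_eq0 -lt0n.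
Qed.

Theorem claim3p4 (R : realFieldType) (M : finType) (n : nat)
  (owner : M -> 'I_n) (C : {set M} -> R)
  (Cnonneg : cost_nonneg C) (Cmono : cost_monotone C) (Cnorm : cost_normalized C)
  (S : 'I_n -> {set M}) (HS : is_allocation owner S) :
  potential C S <= harmonic R n * C (alloc_set S).
Proof.
rewrite -weights_sum mulr_suml /potential.
apply: ler_sum => I _.
rewrite [X in _ <= X]mulrC ler_wpM2r ?invr_ge0 ?ler0n //.
apply: Cmono; rewrite /alloc_set.
apply/bigcupsP => i _; exact: (bigcup_sup i).
Qed.
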